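(* Let $\sigma>0$, $\bar\gamma>0$, $c_\infty\ge0$, and for $\gamma\in(0,\bar\gamma]$ let $\tau_\gamma:[0,\infty)\to[0,\infty)$ be non-decreasing with $\tau_\gamma(0)=0$, and assume there exist $R_1,L\ge0$, $m>0$ such that for all $\gamma\in(0,\bar\gamma]$, $\sup_{r>0}\tau_\gamma(r)/r\le1+\gamma L$ and $\sup_{r>R_1}\tau_\gamma(r)/r\le1-\gamma m$. Let $Q_\gamma$ be the Markov kernel on $[0,\infty)$ $$Q_\gamma(w,A)=\delta_0(A)\int_{\mathbb{R}}\bar p_{\sigma^2\gamma}(\tau_\gamma(w)+\gamma c_\infty,g)\varphi(g)dg+\int_{\mathbb{R}}\mathbb{1}_A(\tau_\gamma(w)+\gamma c_\infty-2\sigma\gamma^{1/2}g)\{1-\bar p_{\sigma^2\gamma}(\tau_\gamma(w)+\gamma c_\infty,g)\}\varphi(g)dg,$$ where $\bar p_{\sigma^2\gamma}(a,g)=1\wedge\varphi_{\sigma^2\gamma}(a-\sigma\sqrt\gamma g)/\varphi_{\sigma^2\gamma}(\sigma\sqrt\gamma g)$. Let $\mathcal V_1^*(w)=w$. Then for all $\gamma\in(0,\bar\gamma]$ and $w\ge0$, $$Q_\gamma\mathcal V_1^*(w)\le(1-\gamma m)\mathcal V_1^*(w)\mathbb{1}_{(R_1,\infty)}(w)+(1+\gamma L)\mathcal V_1^*(w)\mathbb{1}_{(0,R_1]}(w)+\gamma c_\infty.$$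
   Context: $\varphi$ is the standard normal density and $\varphi_s(t)=(2\pi s)^{-1/2}e^{-t^2/(2s)}$. *)

(* Defs.v *)
From HB Require Import structures.
From mathcomp Require Import all_boot all_order all_algebra.
From mathcomp Require Import all_classical all_reals all_analysis.
Set Implicit Arguments. Unset Strict Implicit. Unset Printing Implicit Defensive.
Import Order.TTheory GRing.Theory Num.Theory.
Import numFieldNormedType.Exports.
Local Open Scope classical_set_scope.
Local Open Scope ring_scope.

Definition phi_s {R : realType} (s t : R) : R :=
  (Num.sqrt (2 * pi * s))^-1 * expR (- (t ^+ 2) / (2 * s)).

Definition phi {R : realType} (t : R) : R := phi_s 1 t.

Definition pbar {R : realType} (sigma gamma a g : R) : R :=
  Num.min 1 (phi_s (sigma ^+ 2 * gamma) (a - sigma * Num.sqrt gamma * g)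
             / phi_s (sigma ^+ 2 * gamma) (sigma * Num.sqrt gamma * g)).

Definition Qker {R : realType} (sigma cinf : R) (tau : R -> R) (gamma w : R)
  (A : set R) : \bar R :=
  let a := tau w + gamma * cinf in
  ((\1_A (0 : R))%:E *
     \int[@lebesgue_measure R]_(g in [set: R]) (pbar sigma gamma a g * phi g)%:E
   + \int[@lebesgue_measure R]_(g in [set: R])
       (\1_A (a - 2 * sigma * Num.sqrt gamma * g)
        * (1 - pbar sigma gamma a g) * phi g)%:E)%E.

(* Q_gamma V (w) = \int V(y) Q_gamma(w, dy), written out through the
   definition of the kernel (V(0) times the atom plus the image integral). *)
Definition Qapply {R : realType} (sigma cinf : R) (tau : R -> R) (gamma : R)
  (V : R -> R) (w : R) : \bar R :=
  let a := tau w + gamma * cinf in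
  ((V 0)%:E *
     \int[@lebesgue_measure R]_(g in [set: R]) (pbar sigma gamma a g * phi g)%:E
   + \int[@lebesgue_measure R]_(g in [set: R])
       (V (a - 2 * sigma * Num.sqrt gamma * g)
        * (1 - pbar sigma gamma a g) * phi g)%:E)%E.

Definition V1 {R : realType} (w : R) : R := w.

(* Main.v *)
Require Import Defs.
From HB Require Import structures.
From mathcomp Require Import all_boot all_order all_algebra.
From mathcomp Require Import all_classical all_reals all_analysis.
From mathcomp Require Import measurable_realfun ftc gauss_integral normal_distribution.
From mathcomp Require Import ring lra.
Import Order.TTheory GRing.Theory Num.Theory.
Import numFieldNormedType.Exports.
Local Open Scope classical_set_scope.
Local Open Scope ring_scope.
Section S.
Context {R : realType}.

Lemma cont_aff (a b : R) : continuous (fun x : R => a - b * x).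
Proof.
move=> x; apply: cvgB; first exact: cvg_cst.
apply: cvgM; [exact: cvg_cst | exact: cvg_id].
Qed.

Lemma cont_pp (u : R -> R) : continuous u -> continuous (fun x => Num.max 0 (u x)).
Proof.
move=> cu x.
apply: (@continuous_max _ _ (cst 0) u x); [exact: cvg_cst | exact: cu].
Qed.

Lemma cont_mul (u v : R -> R) : continuous u -> continuous v -> continuous (fun x => u x * v x).
Proof. by move=> cu cv x; apply: cvgM; [exact: cu | exact: cv]. Qed.


Lemma phiE (m x : R) : phi (x - m) = normal_pdf m 1 x.
Proof.
rewrite normal_pdfE ?oner_neq0 //= /phi /phi_s /normal_peak /normal_fun.
rewrite expr1n !mulr1 mul1r.
by rewrite -[pi *+ 2]mulr_natl.
Qed.

Lemma phiE0 (x : R) : phi x = normal_pdf 0 1 x.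
Proof. by rewrite -phiE subr0. Qed.

Lemma phi_ge0 (x : R) : 0 <= phi x.
Proof. by rewrite phiE0 normal_pdf_ge0. Qed.

Lemma phiN (x : R) : phi (- x) = phi x.
Proof. by rewrite /phi /phi_s sqrrN. Qed.

Lemma phi_cont : continuous (@phi R).
Proof.
have -> : @phi R = normal_pdf 0 1 by apply/funext => x; rewrite phiE0.
exact: continuous_normal_pdf (oner_neq0 _).
Qed.

Lemma phic_cont (c : R) : continuous (fun x => phi (x - c)).
Proof.
have -> : (fun x => phi (x - c)) = normal_pdf c 1 by apply/funext => x; rewrite phiE.
exact: continuous_normal_pdf (oner_neq0 _).
Qed.

Lemma phi_le (c x : R) : 0 <= c -> 0 <= c - 2 * x -> phi (x - c) <= phi x.
Proof.
move=> c0 h; rewrite /phi /phi_s ler_wpM2l ?invr_ge0 ?sqrtr_ge0 // ler_expR.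
rewrite !mulr1 ler_wpM2r ?invr_ge0 ?ler0n // lerN2.
have : 0 <= c * (c - 2 * x) by rewrite mulr_ge0.
nra.
Qed.

Lemma integral_phi : (\int[@lebesgue_measure R]_x (phi x)%:E = 1)%E.
Proof.
under eq_integral do rewrite phiE0.
exact: integral_normal_pdf.
Qed.

Lemma E4_fin : (\int[@lebesgue_measure R]_x (expR (- x ^+ 2 / 4))%:E < +oo)%E.
Proof.
have s0 : Num.sqrt (2 : R) != 0 by rewrite gt_eqF // sqrtr_gt0.
have p0 : normal_peak (Num.sqrt (2 : R)) != 0 by rewrite gt_eqF // normal_peak_gt0.
have E : forall x : R, expR (- x ^+ 2 / 4) =
   (normal_peak (Num.sqrt 2))^-1 * normal_pdf 0 (Num.sqrt 2) x.
  move=> x; rewrite normal_pdfE //= mulKf // /normal_fun subr0 sqr_sqrtr ?ler0n //.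
  by have -> : (2 : R) *+ 2 = 4 by rewrite -mulr_natr; lra.
under eq_integral do rewrite E EFinM.
rewrite ge0_integralZl //=.
- by rewrite integral_normal_pdf mule1 ltry.
- by apply/measurable_EFinP; exact: measurable_normal_pdf.
- by move=> x _; rewrite lee_fin normal_pdf_ge0.
- by rewrite lee_fin invr_ge0 normal_peak_ge0.
Qed.

Lemma Mp_le (x : R) : Num.max 0 x * phi x <= expR (- x ^+ 2 / 4).
Proof.
have [hx|hx] := lerP x 0.
  by rewrite mul0r expR_ge0.
rewrite /phi /phi_s !mulr1.
set k := (Num.sqrt (2 * pi))^-1.
have k0 : 0 <= k by rewrite invr_ge0 sqrtr_ge0.
have k1 : k <= 1.
  have pi2 := @pi_ge2 R.
  rewrite invf_le1 ?sqrtr_gt0 ?mulr_gt0 ?pi_gt0 // -[leLHS]sqrtr1 ler_sqrt; lra.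
set E := expR (- x ^+ 2 / 4).
have E0 : 0 <= E by exact: expR_ge0.
have EE : expR (- x ^+ 2 / 2) = E * E by rewrite -expRD; congr expR; lra.
have xE : x * E <= 1.
  rewrite /E mulNr expRN -[x * _]/(x / _) ler_pdivrMr ?expR_gt0 // mul1r.
  apply: le_trans (expR_ge1Dx _). have := sqr_ge0 (1 - x / 2). nra.
rewrite EE.
have h1 : 0 <= x * E by rewrite mulr_ge0 // ltW.
have h2 : k * (x * E) <= 1 by nra.
have h3 : (k * (x * E)) * E <= E by nra.
by have -> : x * (k * (E * E)) = (k * (x * E)) * E by ring.
Qed.

Lemma phi_gt0 (x : R) : (0 < phi x)%R.
Proof. by rewrite /phi /phi_s mulr_gt0 ?expR_gt0 // invr_gt0 sqrtr_gt0 !mulr_gt0 ?pi_gt0. Qed.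

Lemma ratio (s a g : R) : (0 < s)%R ->
  (phi_s (s ^+ 2) (a - s * g) / phi_s (s ^+ 2) (s * g) * phi g = phi (g - a / s))%R.
Proof.
move=> s0.
have s0' : s != 0 by rewrite gt_eqF.
rewrite /phi /phi_s.
set k := (Num.sqrt (2 * pi * s ^+ 2))^-1.
have k0 : k != 0 by rewrite invr_eq0 gt_eqF // sqrtr_gt0 !mulr_gt0 ?pi_gt0 // exprn_gt0.
have E : forall X Y, (k * expR X / (k * expR Y) = expR (X - Y))%R.
  move=> X Y; rewrite expRD expRN; field.
  by rewrite k0 gt_eqF ?expR_gt0.
rewrite E mulrCA -expRD; congr (_ * expR _); field; exact: s0'.
Qed.

Lemma integrand (s a g : R) : (0 < s)%R -> (0 <= a)%R ->
  ((a - 2 * s * g) * (1 - Num.min 1 (phi_s (s ^+ 2) (a - s * g) / phi_s (s ^+ 2) (s * g)))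
   * phi g = s * Num.max 0 (a / s - 2 * g) * (phi g - phi (g - a / s)))%R.
Proof.
move=> s0 a0.
have s0' : s != 0 by rewrite gt_eqF.
set c := (a / s)%R.
have c0 : (0 <= c)%R by rewrite divr_ge0 // ltW.
have ac : a = (s * c)%R by rewrite /c mulrC divfK.
set r := (phi_s (s ^+ 2) (a - s * g) / phi_s (s ^+ 2) (s * g))%R.
have rE : (r * phi g = phi (g - c))%R by rewrite /r ratio.
have pg := phi_gt0 g.
have [h|h] := lerP 0 (c - 2 * g).
  have hle := @phi_le c g c0 h.
  have r1 : (r <= 1)%R.
    by rewrite -(ler_pM2r pg) mul1r rE.
  rewrite (min_idPr r1) -rE ac; ring.
have hle : (phi g <= phi (g - c))%R.
  have := @phi_le c (c - g) c0.
  rewrite (_ : c - g - c = - g)%R; last by ring.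
  rewrite phiN -[c - g]opprB phiN; apply; lra.
have r1 : (1 <= r)%R by rewrite -(ler_pM2r pg) mul1r rE.
by rewrite (min_idPl r1) subrr mulr0 mul0r mulr0 mul0r.
Qed.


Lemma cst_cont (k : R) : continuous (fun _ : R => k).
Proof. by move=> x; exact: cvg_cst. Qed.

Lemma cont_lin (a b : R) : continuous (fun x : R => a * x - b).
Proof.
move=> x; apply: cvgB; last exact: cvg_cst.
apply: cvgM; [exact: cvg_cst | exact: cvg_id].
Qed.

Lemma contN : continuous (fun x : R => - x).
Proof. by move=> x; apply: cvgN; exact: cvg_id. Qed.

Local Notation mu := (@lebesgue_measure R).
Local Open Scope ereal_scope.
Lemma split0 (G : R -> R) : (forall x, 0 <= G x)%R -> continuous G ->
  \int[mu]_x (G x)%:E = \int[mu]_(x in `[0%R, +oo[) (G x)%:E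
    + \int[mu]_(x in `]-oo, 0%R]) (G x)%:E.
Proof.
move=> G0 cG.
have mG : measurable_fun [set: R] G by exact: continuous_measurable_fun.
have mposnums : measurable [set x : R | 0 <= x]%R by rewrite -set_itvcy.
rewrite -(setUv [set x : R | 0 <= x]%R) ge0_integral_setU//= ; last 4 first.
  exact: measurableC.
  by apply/measurable_EFinP; rewrite setUv.
  by move=> x _; rewrite lee_fin.
  exact/disj_setPCl.
rewrite -set_itvcy// setCitvr.
by rewrite integral_itv_bndo_bndc; last exact/measurable_EFinP/measurable_funTS.
Qed.

Lemma reflT (G : R -> R) : (forall x, 0 <= G x)%R -> continuous G ->
  \int[mu]_x (G (- x))%:E = \int[mu]_x (G x)%:E.
Proof.
move=> G0 cG.
have cGN : continuous (G \o -%R).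
  move=> x; apply: continuous_comp; last exact: cG.
  exact: (@continuousN _ R^o).
rewrite (@split0 G G0 cG) (@split0 (G \o -%R))//; last by move=> x; exact: G0.
have h1 := @ge0_integration_by_substitutionNy R G 0.
have h2 := @ge0_integration_by_substitutionNy R (G \o -%R) 0.
rewrite oppr0 in h1 h2.
rewrite h1 ?h2; first last.
- by move=> x _; exact: G0.
- exact: continuous_subspaceT.
- by move=> x _; exact: G0.
- exact: continuous_subspaceT.
rewrite addeC; congr (_ + _); apply: eq_integral => x _ /=; by rewrite opprK.
Qed.

Lemma transT (G : R -> R) (b : R) : (forall x, 0 <= G x)%R -> continuous G ->
  \int[mu]_x (G (x + b)%R)%:E = \int[mu]_x (G x)%:E.
Proof.
move=> G0 cG.
have F'E : (fun x : R => x + b)%R^`()%classic = cst 1%R.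
  by apply/funext => x; rewrite derive1E deriveD// derive_id derive_cst addr0.
rewrite (@increasing_ge0_integration_by_substitutionT _ (fun x => x + b)%R G)//.
- by apply: eq_integral => x _; rewrite F'E /= mulr1.
- by move=> x y xy; rewrite ltrD2r.
- by rewrite F'E => ?; exact: cvg_cst.
- by rewrite F'E; exact: is_cvg_cst.
- by rewrite F'E; exact: is_cvg_cst.
- exact: cvg_addrr_Ny.
- exact: cvg_addrr.
Qed.

Lemma reflb (G : R -> R) (b : R) : (forall x, 0 <= G x)%R -> continuous G ->
  \int[mu]_x (G (b - x))%:E = \int[mu]_x (G x)%:E.
Proof.
move=> G0 cG.
have cGN : continuous (G \o -%R).
  move=> x; apply: continuous_comp; last exact: cG.
  exact: (@continuousN _ R^o).
transitivity (\int[mu]_x ((G \o -%R) (x + - b)%R)%:E).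
  by apply: eq_integral => x _ /=; rewrite opprD opprK addrC.
rewrite (@transT (G \o -%R) (- b)) //; last by move=> x; exact: G0.
exact: reflT.
Qed.

Lemma intD (F G : R -> R) : measurable_fun setT F -> measurable_fun setT G ->
  (forall x, 0 <= F x)%R -> (forall x, 0 <= G x)%R ->
  \int[mu]_x (F x + G x)%:E = \int[mu]_x (F x)%:E + \int[mu]_x (G x)%:E.
Proof.
move=> mF mG F0 G0; under eq_integral do rewrite EFinD.
apply: ge0_integralD => //.
- by move=> x _; rewrite lee_fin.
- exact/measurable_EFinP.
- by move=> x _; rewrite lee_fin.
- exact/measurable_EFinP.
Qed.

Lemma intZ (k : R) (F : R -> R) : (0 <= k)%R -> measurable_fun setT F ->
  (forall x, 0 <= F x)%R ->
  \int[mu]_x (k * F x)%:E = k%:E * \int[mu]_x (F x)%:E.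
Proof.
move=> k0 mF F0; under eq_integral do rewrite EFinM.
apply: ge0_integralZl => //.
- exact/measurable_EFinP.
- by move=> x _; rewrite lee_fin.
Qed.

Lemma key (s c : R) : (0 < s)%R -> (0 <= c)%R ->
  \int[mu]_x (s * Num.max 0 (c - 2 * x) * (phi x - phi (x - c)))%:E = (s * c)%:E.
Proof.
move=> s0 c0.
pose P (x : R) := (s * Num.max 0 (c - 2 * x) * phi x)%R.
pose Q (x : R) := (s * Num.max 0 (c - 2 * x) * phi (x - c))%R.
pose N (x : R) := (s * Num.max 0 (2 * x - c) * phi x)%R.
pose Mp (x : R) := (Num.max 0 x * phi x)%R.
pose Mn (x : R) := (Num.max 0 (- x) * phi x)%R.
pose f (x : R) := (s * Num.max 0 (c - 2 * x) * (phi x - phi (x - c)))%R.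
have cf : continuous f.
  apply: cont_mul.
    apply: cont_mul; first exact: cst_cont.
    apply: cont_pp; exact: cont_aff.
  by move=> x; apply: cvgB; [exact: phi_cont | exact: phic_cont].
have cP : continuous P.
  apply: cont_mul; last exact: phi_cont.
  apply: cont_mul; first exact: cst_cont.
  apply: cont_pp; exact: cont_aff.
have cQ : continuous Q.
  apply: cont_mul; last exact: phic_cont.
  apply: cont_mul; first exact: cst_cont.
  apply: cont_pp; exact: cont_aff.
have cN : continuous N.
  apply: cont_mul; last exact: phi_cont.
  apply: cont_mul; first exact: cst_cont.
  apply: cont_pp; exact: cont_lin.
have cMp : continuous Mp.
  apply: cont_mul; last exact: phi_cont.
  apply: cont_pp => x; exact: cvg_id.
have cMn : continuous Mn.
  apply: cont_mul; last exact: phi_cont.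
  apply: cont_pp; exact: contN.
have mf := continuous_measurable_fun cf.
have mP := continuous_measurable_fun cP.
have mQ := continuous_measurable_fun cQ.
have mN := continuous_measurable_fun cN.
have mMp := continuous_measurable_fun cMp.
have mMn := continuous_measurable_fun cMn.
have ppge0 (y : R) : (0 <= Num.max 0 y)%R by rewrite le_max lexx.
have f0 x : (0 <= f x)%R.
  rewrite /f; have [h|h] := lerP 0 (c - 2 * x).
    apply: mulr_ge0; first by rewrite mulr_ge0 // ltW.
    by rewrite subr_ge0; apply: phi_le.
  by rewrite mulr0 mul0r.
have P0 x : (0 <= P x)%R by rewrite /P !mulr_ge0 ?phi_ge0 // ltW.
have Q0 x : (0 <= Q x)%R by rewrite /Q !mulr_ge0 ?phi_ge0 // ltW.
have N0 x : (0 <= N x)%R by rewrite /N !mulr_ge0 ?phi_ge0 // ltW.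
have Mp0 x : (0 <= Mp x)%R by rewrite /Mp !mulr_ge0 ?phi_ge0.
have Mn0 x : (0 <= Mn x)%R by rewrite /Mn !mulr_ge0 ?phi_ge0.
have hb : \int[mu]_x (f x)%:E + \int[mu]_x (Q x)%:E = \int[mu]_x (P x)%:E.
  rewrite -intD //; apply: eq_integral => x _; congr EFin.
  by rewrite /f /Q /P; ring.
have hc : \int[mu]_x (Q x)%:E = \int[mu]_x (N x)%:E.
  rewrite -(@reflb Q c) //; apply: eq_integral => x _; congr EFin.
  rewrite /Q /N (_ : c - x - c = - x)%R; last by ring.
  by rewrite phiN (_ : c - 2 * (c - x) = 2 * x - c)%R //; ring.
have s2 : (0 <= 2 * s)%R by rewrite mulr_ge0 ?ler0n // ltW.
have sc : (0 <= s * c)%R by rewrite mulr_ge0 // ltW.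
have mphi := continuous_measurable_fun phi_cont.
have mk (k : R) (F : R -> R) : measurable_fun setT F -> measurable_fun setT (fun x => k * F x)%R.
  by move=> mF; apply: measurable_funM.
have kge0 (k : R) (F : R -> R) : (0 <= k)%R -> (forall x, 0 <= F x)%R -> forall x, (0 <= k * F x)%R.
  by move=> k0 F0 x; rewrite mulr_ge0.
have hd : \int[mu]_x (P x)%:E + (2 * s)%:E * \int[mu]_x (Mp x)%:E =
    (s * c)%:E * \int[mu]_x (phi x)%:E + (2 * s)%:E * \int[mu]_x (Mn x)%:E
    + \int[mu]_x (N x)%:E.
  rewrite -(@intZ _ _ s2 mMp Mp0) -(@intZ _ _ s2 mMn Mn0) -(@intZ _ _ sc mphi phi_ge0).
  rewrite -(@intD _ _ mP (mk _ _ mMp) P0 (kge0 _ _ s2 Mp0)).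
  rewrite -(@intD _ _ (mk _ _ mphi) (mk _ _ mMn) (kge0 _ _ sc phi_ge0) (kge0 _ _ s2 Mn0)).
  rewrite -intD //; first last.
  - by move=> x; apply: addr_ge0; [exact: (kge0 _ _ sc phi_ge0) | exact: (kge0 _ _ s2 Mn0)].
  - by apply: measurable_funD; apply: mk.
  apply: eq_integral => x _; congr EFin.
  rewrite /P /Mp /Mn /N.
  have e : (Num.max 0 (c - 2 * x) = c + 2 * Num.max 0 (- x) + Num.max 0 (2 * x - c) - 2 * Num.max 0 x)%R.
    have [h1|h1] := lerP 0 (c - 2 * x); have [h2|h2] := lerP 0 (- x);
    have [h3|h3] := lerP 0 (2 * x - c); have [h4|h4] := lerP 0 x; lra.
  rewrite e; ring.
have he : \int[mu]_x (Mn x)%:E = \int[mu]_x (Mp x)%:E.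
  rewrite -(@reflT Mp) //; apply: eq_integral => x _; congr EFin.
  by rewrite /Mp /Mn phiN.
have hf : \int[mu]_x (Mp x)%:E < +oo.
  apply: le_lt_trans E4_fin.
  apply: ge0_le_integral => //.
  - by move=> x _; rewrite lee_fin.
  - exact/measurable_EFinP.
  - apply/measurable_EFinP; apply: measurableT_comp => //.
    apply: measurable_funM => //; apply: measurableT_comp => //.
  - by move=> x _; rewrite lee_fin Mp_le.
have hg : \int[mu]_x (N x)%:E < +oo.
  apply: le_lt_trans (_ : _ <= (2 * s)%:E * \int[mu]_x (Mp x)%:E) _.
    rewrite -(@intZ _ _ s2 mMp Mp0).
    apply: ge0_le_integral => //.
    - by move=> x _; rewrite lee_fin.
    - exact/measurable_EFinP.
    - by apply/measurable_EFinP; exact: measurable_funM.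
    move=> x _; rewrite lee_fin /N /Mp.
    have hA : (Num.max 0 (2 * x - c) <= 2 * Num.max 0 x)%R.
      by have [h1|h1] := lerP 0 (2 * x - c); have [h2|h2] := lerP 0 x; lra.
    have hp : (0 <= s * phi x)%R by rewrite mulr_ge0 ?phi_ge0 // ltW.
    have := ler_wpM2r hp hA.
    set A := (Num.max 0 (2 * x - c))%R; set B := (Num.max 0 x)%R.
    rewrite (_ : s * A * phi x = A * (s * phi x))%R; last by ring.
    by rewrite (_ : 2 * s * (B * phi x) = 2 * B * (s * phi x))%R; last by ring.
  have Mfin : \int[mu]_x (Mp x)%:E \is a fin_num.
    by rewrite ge0_fin_numE // integral_ge0 // => x _; rewrite lee_fin.
  by rewrite -(fineK Mfin) -EFinM ltry.
have Mfin : \int[mu]_x (Mp x)%:E \is a fin_num.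
  by rewrite ge0_fin_numE // integral_ge0 // => x _; rewrite lee_fin.
have Zfin : \int[mu]_x (N x)%:E \is a fin_num.
  by rewrite ge0_fin_numE // integral_ge0 // => x _; rewrite lee_fin.
rewrite (_ : \int[mu]_x _ = \int[mu]_x (f x)%:E) //.
move: hd hb; rewrite hc he integral_phi mule1 -(fineK Mfin) -(fineK Zfin).
move: (\int[mu]_x (f x)%:E) (\int[mu]_x (P x)%:E) => A Pi.
case: Pi => [p| |] //=; case: A => [a| |] //=.
move=> h1 h2; rewrite -!EFinM -!EFinD in h1 h2; have e1 := EFin_inj h1; have e2 := EFin_inj h2; congr EFin; lra.
Qed.

End S.

Local Close Scope classical_set_scope.

Theorem proposition8 (R : realType) (sigma gbar cinf R1 L m : R)
  (tau : R -> R -> R)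
  (hsigma : 0 < sigma) (hgbar : 0 < gbar) (hcinf : 0 <= cinf)
  (hR1 : 0 <= R1) (hL : 0 <= L) (hm : 0 < m)
  (htau_pos : forall gamma, 0 < gamma <= gbar ->
     forall r, 0 <= r -> 0 <= tau gamma r)
  (htau_mono : forall gamma, 0 < gamma <= gbar ->
     forall r s, 0 <= r -> r <= s -> tau gamma r <= tau gamma s)
  (htau0 : forall gamma, 0 < gamma <= gbar -> tau gamma 0 = 0)
  (hsupL : forall gamma, 0 < gamma <= gbar ->
     forall r, 0 < r -> tau gamma r / r <= 1 + gamma * L)
  (hsupm : forall gamma, 0 < gamma <= gbar ->
     forall r, R1 < r -> tau gamma r / r <= 1 - gamma * m) :
  forall gamma w, 0 < gamma <= gbar -> 0 <= w ->
    (Qapply sigma cinf (tau gamma) gamma V1 w <=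
     ((1 - gamma * m) * V1 w * (if R1 < w then 1 else 0)
      + (1 + gamma * L) * V1 w * (if (0 < w) && (w <= R1) then 1 else 0)
      + gamma * cinf)%:E)%E.
Proof.
move=> gamma w hg hw.
have /andP [g0 gle] := hg.
have t0 := htau_pos gamma hg w hw.
have a0 : 0 <= tau gamma w + gamma * cinf by rewrite addr_ge0 // mulr_ge0 // ltW.
have s0 : 0 < sigma * Num.sqrt gamma by rewrite mulr_gt0 // sqrtr_gt0.
rewrite /Qapply /V1 /= mul0e add0e.
set a := tau gamma w + gamma * cinf.
set s := sigma * Num.sqrt gamma.
have sE : sigma ^+ 2 * gamma = s ^+ 2 by rewrite /s exprMn sqr_sqrtr // ltW.
have s2E : 2 * sigma * Num.sqrt gamma = 2 * s by rewrite /s mulrA.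
rewrite (_ : (\int[@lebesgue_measure R]_(g in [set: R]) _)%E =
   (\int[@lebesgue_measure R]_x (s * Num.max 0 (a / s - 2 * x) * (phi x - phi (x - a / s)))%:E)%E);
  last first.
  apply: eq_integral => x _; congr EFin.
  by rewrite /pbar sE s2E -/s integrand.
rewrite key //; last by rewrite divr_ge0 // ltW.
rewrite mulrC divfK ?gt_eqF // lee_fin /a lerD2r.
have [wz|wpos] := eqVneq w 0.
  by rewrite wz htau0 // ltNge hR1 ltxx /= !mulr0 !addr0.
have w0 : 0 < w by rewrite lt_neqAle eq_sym wpos hw.
rewrite w0 /=.
have [hR|hR] := ltP R1 w.
  rewrite mulr1 mulr0 addr0 -ler_pdivrMr //; last exact: hsupm.
rewrite mulr0 mulr1 add0r -ler_pdivrMr //; exact: hsupL.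
Qed.
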